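(* Let $\tau,t\in\mathbb{R}$ and let $P_n(x;\tau,t)$ be the monic orthogonal polynomials for the weight $\omega(x;\tau,t)=\exp(-x^6+\tau x^4+tx^2)$ on $\mathbb{R}$, with recurrence coefficients $\beta_n$. Write $C_n=\beta_{n-1}+\beta_n+\beta_{n+1}$. Then for $n\ge1$ $$\frac{d^2P_n}{dx^2}+R_n(x;\tau,t)\frac{dP_n}{dx}+T_n(x;\tau,t)P_n=0,$$ where $$R_n=2x\left\{t-3x^4+2\tau x^2-\frac{2\{6x^2-2\tau+3(\beta_n+\beta_{n+1})\}}{6x^4-4\tau x^2-2t+6\beta_nC_n+6\beta_{n+1}C_{n+1}+(\beta_n+\beta_{n+1})(6x^2-4\tau)}\right\},$$ and \begin{align*} T_n&=2\beta_n(3C_n-2\tau+9x^2)-4x^2\beta_n(3C_n-2\tau+3x^2)\{\beta_n(3C_n-2\tau+3x^2)-t+3x^4-2\tau x^2\}\\ &\quad+\beta_{n}\{6C_{n-1}\beta_{n-1}+6C_n\beta_n+(\beta_{n-1}+\beta_n)(6x^2-4\tau)-2t+6x^4-4\tau x^2\}\\ &\qquad\times\{6C_n\beta_n+6C_{n+1}\beta_{n+1}+(\beta_n+\beta_{n+1})(6x^2-4\tau)-2t+6x^4-4\tau x^2\}\\ &\quad+\frac{4x^2\beta_n(3C_n-2\tau+3x^2)\{3(\beta_n+\beta_{n+1})-2\tau+6x^2\}}{2\tau(\beta_n+\beta_{n+1})-3x^2(\beta_n+\beta_{n+1})-3C_n\beta_n-3C_{n+1}\beta_{n+1}+t-3x^4+2\tau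 x^2}. \end{align*}
   Context: The monic polynomials $P_n(x;\tau,t)$ of exact degree $n$ are orthogonal with respect to $\omega(x;\tau,t)$ on $\mathbb{R}$. They satisfy $P_{n+1}(x)=xP_n(x)-\beta_nP_{n-1}(x)$ with $P_{-1}=0$, $P_0=1$, where $\beta_n>0$ for $n\ge1$. The convention $\beta_0=0$ is used. *)

(* Defs.v *)
From HB Require Import structures.
From mathcomp Require Import all_boot all_order all_algebra.
From mathcomp Require Import classical_sets reals ereal sequences exp measure lebesgue_measure lebesgue_integral.
Set Implicit Arguments. Unset Strict Implicit. Unset Printing Implicit Defensive.
Import Order.TTheory GRing.Theory Num.Theory.
Local Open Scope ring_scope.

Definition omega {R : realType} (tau t : R) (x : R) : R :=
  expR (- x ^+ 6 + tau * x ^+ 4 + t * x ^+ 2).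

Definition monic_OPS {R : realType} (tau t : R) (P : nat -> {poly R}) : Prop :=
  (forall n, P n \is monic /\ size (P n) = n.+1) /\
  (forall m n, m <> n ->
     (\int[@lebesgue_measure R]_(x in [set: R])
        ((P m).[x] * (P n).[x] * omega tau t x)%:E = 0)%E).

Definition recurrence_coeffs {R : realType} (P : nat -> {poly R}) (beta : nat -> R)
  : Prop :=
  P 0%N = 1 /\ beta 0%N = 0 /\ (forall n, (1 <= n)%N -> 0 < beta n) /\
  P 1%N = 'X * P 0%N /\
  (forall n, (1 <= n)%N -> P n.+1 = 'X * P n - beta n *: P n.-1).

(* C_n = beta_{n-1} + beta_n + beta_{n+1} (used for n >= 1; C_0 only
   appears multiplied by beta_0 = 0). *)
Definition Cn {R : realType} (beta : nat -> R) (n : nat) : R :=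
  beta n.-1 + beta n + beta n.+1.

Definition denR {R : realType} (tau t : R) (beta : nat -> R) (n : nat) (x : R) : R :=
  6 * x ^+ 4 - 4 * tau * x ^+ 2 - 2 * t + 6 * beta n * Cn beta n
  + 6 * beta n.+1 * Cn beta n.+1 + (beta n + beta n.+1) * (6 * x ^+ 2 - 4 * tau).

Definition denT {R : realType} (tau t : R) (beta : nat -> R) (n : nat) (x : R) : R :=
  2 * tau * (beta n + beta n.+1) - 3 * x ^+ 2 * (beta n + beta n.+1)
  - 3 * Cn beta n * beta n - 3 * Cn beta n.+1 * beta n.+1
  + t - 3 * x ^+ 4 + 2 * tau * x ^+ 2.

Definition Rn {R : realType} (tau t : R) (beta : nat -> R) (n : nat) (x : R) : R :=
  2 * x * (t - 3 * x ^+ 4 + 2 * tau * x ^+ 2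
           - 2 * (6 * x ^+ 2 - 2 * tau + 3 * (beta n + beta n.+1))
             / denR tau t beta n x).

Definition Tn {R : realType} (tau t : R) (beta : nat -> R) (n : nat) (x : R) : R :=
  2 * beta n * (3 * Cn beta n - 2 * tau + 9 * x ^+ 2)
  - 4 * x ^+ 2 * beta n * (3 * Cn beta n - 2 * tau + 3 * x ^+ 2)
      * (beta n * (3 * Cn beta n - 2 * tau + 3 * x ^+ 2) - t + 3 * x ^+ 4
         - 2 * tau * x ^+ 2)
  + beta n
      * (6 * Cn beta n.-1 * beta n.-1 + 6 * Cn beta n * beta n
         + (beta n.-1 + beta n) * (6 * x ^+ 2 - 4 * tau) - 2 * t + 6 * x ^+ 4
         - 4 * tau * x ^+ 2)
      * (6 * Cn beta n * beta n + 6 * Cn beta n.+1 * beta n.+1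
         + (beta n + beta n.+1) * (6 * x ^+ 2 - 4 * tau) - 2 * t + 6 * x ^+ 4
         - 4 * tau * x ^+ 2)
  + 4 * x ^+ 2 * beta n * (3 * Cn beta n - 2 * tau + 3 * x ^+ 2)
      * (3 * (beta n + beta n.+1) - 2 * tau + 6 * x ^+ 2)
      / denT tau t beta n x.

(* Main.v *)
Require Import Defs.
From HB Require Import structures.
From mathcomp Require Import all_boot all_order all_algebra.
From mathcomp Require Import classical_sets reals ereal sequences exp measure lebesgue_measure lebesgue_integral.
From mathcomp Require Import all_analysis boolp functions mathcomp_extra measurable_realfun.
From mathcomp Require Import ring lra zify.
Import Order.TTheory GRing.Theory Num.Theory.
Import numFieldNormedType.Exports.
Local Open Scope ring_scope.

Section PolyId.
Variables (R : realType) (tau t : R) (P : nat -> {poly R}) (beta : nat -> R).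
Hypotheses (hP0 : P 0%N = 1) (hb0 : beta 0%N = 0) (hP1 : P 1%N = 'X * P 0%N)
  (hrec : forall n, (1 <= n)%N -> P n.+1 = 'X * P n - beta n *: P n.-1).

Lemma hrec2 k : P k.+2 = 'X * P k.+1 - (beta k.+1)%:P * P k.
Proof. by rewrite hrec // mul_polyC. Qed.

Definition Apoly n : {poly R} :=
  6%:P * 'X^4 + (6 * (beta n + beta n.+1) - 4 * tau)%:P * 'X^2
  + (6 * beta n * Cn beta n + 6 * beta n.+1 * Cn beta n.+1
     - 4 * tau * (beta n + beta n.+1) - 2 * t)%:P.
Definition Bpoly n : {poly R} :=
  (6 * beta n)%:P * 'X^3 + (6 * beta n * Cn beta n - 4 * tau * beta n)%:P * 'X.
Definition vpoly : {poly R} :=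
  6%:P * 'X^5 - (4 * tau)%:P * 'X^3 - (2 * t)%:P * 'X.
Definition Epoly n : {poly R} := Bpoly n * P n - (beta n)%:P * Apoly n * P n.-1.

Lemma idF n : (1 <= n)%N ->
  vpoly * P n + Epoly n =
  (6 * beta n.-1 * beta n + 6 * beta n * beta n + 12 * beta n * beta n.+1
   + 6 * beta n * beta n.+2 - 4 * beta n * tau + 6 * beta n.+1 * beta n.+1
   + 12 * beta n.+1 * beta n.+2 - 4 * beta n.+1 * tau + 6 * beta n.+2 * beta n.+2
   + 6 * beta n.+2 * beta n.+3 - 4 * beta n.+2 * tau - 2 * t)%:P * P n.+1
  + (6 * (beta n + beta n.+1 + beta n.+2 + beta n.+3 + beta n.+4) - 4 * tau)%:P
     * P n.+3
  + 6%:P * P n.+4.+1.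
Proof.
case: n => // k _.
rewrite /Epoly /vpoly /Apoly /Bpoly /Cn /=.
rewrite !hrec2.
ring.
Qed.


Lemma idE n : (1 <= n)%N ->
  Epoly n =
  (- 6 * beta n.-1.-1 * beta n.-1 * beta n - 6 * beta n.-1 * beta n.-1 * beta n
   - 12 * beta n.-1 * beta n * beta n - 6 * beta n.-1 * beta n * beta n.+1
   + 4 * beta n.-1 * beta n * tau - 6 * beta n * beta n * beta n
   - 12 * beta n * beta n * beta n.+1 + 4 * beta n * beta n * tau
   - 6 * beta n * beta n.+1 * beta n.+1 - 6 * beta n * beta n.+1 * beta n.+2
   + 4 * beta n * beta n.+1 * tau + 2 * beta n * t)%:P * P n.-1
  + (- 6 * beta n.-1.-1.-1 * beta n.-1.-1 * beta n.-1 * beta n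
     - 6 * beta n.-1.-1 * beta n.-1.-1 * beta n.-1 * beta n
     - 6 * beta n.-1.-1 * beta n.-1 * beta n.-1 * beta n
     - 6 * beta n.-1.-1 * beta n.-1 * beta n * beta n
     - 6 * beta n.-1.-1 * beta n.-1 * beta n * beta n.+1
     + 4 * beta n.-1.-1 * beta n.-1 * beta n * tau)%:P * P n.-1.-1.-1
  + (- 6 * beta n.-1.-1.-1.-1 * beta n.-1.-1.-1 * beta n.-1.-1 * beta n.-1 * beta n)%:P
     * P n.-1.-1.-1.-1.-1.
Proof.
case: n => // n _.
rewrite /Epoly /Apoly /Bpoly /Cn.
case: n => [|[|[|[|n]]]] /=; rewrite ?hrec2 ?hP1 ?hP0 ?hb0; ring.
Qed.

End PolyId.

Section FunctionalL.
Variables (R : realType) (tau t : R) (P : nat -> {poly R}) (beta : nat -> R).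
Variable L : {poly R} -> R.
Hypotheses (LD : forall p q, L (p + q) = L p + L q)
  (LZ : forall c p, L (c%:P * p) = c * L p)
  (Lorth : forall m n, m <> n -> L (P m * P n) = 0)
  (LIBP : forall p, L p^`() = L (p * vpoly R tau t))
  (Lpos : 0 < L (P 0%N * P 0%N)).
Hypotheses (hsize : forall n, P n \is monic /\ size (P n) = n.+1).
Hypotheses (hP0 : P 0%N = 1) (hb0 : beta 0%N = 0) (hbpos : forall n, (1 <= n)%N -> 0 < beta n)
  (hP1 : P 1%N = 'X * P 0%N)
  (hrec : forall n, (1 <= n)%N -> P n.+1 = 'X * P n - beta n *: P n.-1).

Lemma L0 : L 0 = 0.
Proof. by have := LZ 0 0; rewrite mul0r mul0r. Qed.

Lemma LN p : L (- p) = - L p.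
Proof. by rewrite -mulN1r -polyCN LZ mulN1r. Qed.

Lemma LB p q : L (p - q) = L p - L q.
Proof. by rewrite LD LN. Qed.

Lemma hrecA k : P k.+1 = 'X * P k - (beta k)%:P * P k.-1.
Proof.
case: k => [|k]; first by rewrite hP1 hb0 mul0r subr0.
by rewrite hrec // mul_polyC.
Qed.

Lemma size_red (q : {poly R}) s : size q = s.+1 ->
  (size (q - lead_coef q *: P s)%R <= s)%N.
Proof.
move=> hq; apply/leq_sizeP => j hj.
have [hm hs] := hsize s.
rewrite coefB coefZ.
move: hj; rewrite leq_eqVlt => /orP[/eqP <-|hsj].
- have -> : (P s)`_s = 1.
    by move: hm => /monicP; rewrite /lead_coef hs /=.
  by rewrite mulr1 /lead_coef hq /= subrr.
- rewrite !nth_default ?mulr0 ?subr0 //.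
  + by rewrite hs.
  + by rewrite hq.
Qed.

Lemma LZr c p : L (c *: p) = c * L p.
Proof. by rewrite -mul_polyC LZ. Qed.

Lemma orth_low_aux s : forall (q : {poly R}), (size q <= s)%N ->
  forall m, (s <= m)%N -> L (P m * q) = 0.
Proof.
elim: s => [|s IH] q hq m hm.
- move: hq; rewrite leqn0 size_poly_eq0 => /eqP ->.
  by rewrite mulr0 L0.
- have [hqs|hqs] := leqP (size q) s.
  + by apply: IH => //; apply: ltnW.
  + have hq1 : size q = s.+1 by apply/eqP; rewrite eqn_leq hq hqs.
    have hr := @size_red q s hq1.
    set r := q - lead_coef q *: P s in hr.
    have -> : q = r + lead_coef q *: P s by rewrite /r subrK.
    rewrite mulrDr LD (IH _ hr m (ltnW hm)) add0r -scalerAr LZr.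
    by rewrite Lorth ?mulr0 // => hms; rewrite hms ltnn in hm.
Qed.

Lemma orth_low m (q : {poly R}) : (size q <= m)%N -> L (P m * q) = 0.
Proof. by move=> h; apply: (@orth_low_aux m q h m (leqnn m)). Qed.

Definition hnorm k := L (P k * P k).

Lemma hnorm_rec k : hnorm k.+1 = beta k.+1 * hnorm k.
Proof.
have e : P k.+1 * P k.+1 = P k.+2 * P k + (beta k.+1)%:P * (P k * P k)
   - (beta k)%:P * (P k.+1 * P k.-1).
  have h1 := hrecA k; have h2 := hrecA k.+1; rewrite /= in h2.
  by rewrite h2 {2}h1; ring.
rewrite /hnorm e LB LD !LZ (@Lorth k.+2 k) ?(@Lorth k.+1 k.-1) ?mulr0 ?subr0 ?add0r //;
  by lia.
Qed.

Lemma hnorm_pos k : 0 < hnorm k.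
Proof.
elim: k => [|k IH]; first exact: Lpos.
by rewrite hnorm_rec mulr_gt0 // hbpos.
Qed.

Lemma zero_of_orth n (D : {poly R}) : (size D <= n)%N ->
  (forall k, (k < n)%N -> L (D * P k) = 0) -> D = 0.
Proof.
move=> hD hL; apply/eqP; apply: contraT => hD0.
have hs : size D = (size D).-1.+1.
  by rewrite prednK // lt0n size_poly_eq0.
set m := (size D).-1 in hs.
have hmn : (m < n)%N by rewrite -hs.
have hr := @size_red D m hs.
set r := D - lead_coef D *: P m in hr.
have eD : D = r + lead_coef D *: P m by rewrite /r subrK.
have := hL m hmn.
rewrite {1}eD mulrDl LD mulrC orth_low // -scalerAl LZr add0r.
move/eqP; rewrite mulf_eq0 => /orP[|/eqP h].
- by rewrite lead_coef_eq0 (negPf hD0).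
- by have := hnorm_pos m; rewrite /hnorm h ltxx.
Qed.

Lemma size_cP (c : R) j n : (j < n)%N -> (size (c%:P * P j)%R <= n)%N.
Proof.
move=> hj; rewrite mul_polyC (leq_trans (size_scale_leq _ _)) //.
by have [_ ->] := hsize j.
Qed.

Lemma lowering n : (P n)^`() =
  - Bpoly R tau beta n * P n + (beta n)%:P * Apoly R tau t beta n * P n.-1.
Proof.
case: n => [|k].
  rewrite hP0 -polyC1 derivC /Bpoly hb0; ring.
set n := k.+1.
have hn : (0 < n)%N by [].
set D := (P n)^`() + Epoly R tau t P beta n.
have hD : D = 0.
  apply: (@zero_of_orth n).
  - rewrite /D (leq_trans (size_polyD _ _)) // geq_max; apply/andP; split.
    + have hPn : P n != 0.
        by rewrite -size_poly_eq0; have [_ ->] := hsize n.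
      have := lt_size_deriv hPn; have [_ ->] := hsize n; by [].
    + rewrite (@idE R tau t P beta hP0 hb0 hP1 hrec n hn).
      rewrite (leq_trans (size_polyD _ _)) // geq_max; apply/andP; split.
      * rewrite (leq_trans (size_polyD _ _)) // geq_max; apply/andP; split.
        -- by apply: size_cP; rewrite /n /=; lia.
        -- by apply: size_cP; rewrite /n /=; lia.
      * by apply: size_cP; rewrite /n /=; lia.
  - move=> j hj.
    have hibp := LIBP (P n * P j).
    rewrite derivM LD (@orth_low n (P j)^`()) ?addr0 in hibp; last first.
      have [_ hs] := hsize j.
      have [->|hPj] := eqVneq (P j) 0; first by rewrite deriv0 size_poly0.
      by have := lt_size_deriv hPj; rewrite hs; lia.
    rewrite /D mulrDl LD hibp -LD.
    have -> : P n * P j * vpoly R tau t + Epoly R tau t P beta n * P j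
      = (vpoly R tau t * P n + Epoly R tau t P beta n) * P j by ring.
    rewrite (@idF R tau t P beta hrec n hn) !mulrDl !LD -!mulrA !LZ !Lorth ?mulr0 ?addr0 //;
      rewrite /n /= in hj *; lia.
have : (P n)^`() = D - Epoly R tau t P beta n by rewrite /D addrK.
by rewrite hD sub0r /Epoly => ->; ring.
Qed.

End FunctionalL.

Lemma final_step (R : realType) (tau t : R) (P : nat -> {poly R}) (beta : nat -> R)
  (hb0 : beta 0%N = 0)
  (hrecm : forall n, (1 <= n)%N -> P n = 'X * P n.-1 - (beta n.-1)%:P * P n.-1.-1)
  (L1 : forall n, (P n)^`() = - @Bpoly R tau beta n * P n + (beta n)%:P * @Apoly R tau t beta n * P n.-1)
  n (hn : (1 <= n)%N) (x : R) :
  denR tau t beta n x != 0 -> denT tau t beta n x != 0 ->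
    (P n)^`(2).[x] + Rn tau t beta n x * (P n)^`().[x]
    + Tn tau t beta n x * (P n).[x] = 0.
Proof.
move=> hR hT.
rewrite derivSn derivn1 L1 !poly.derivE !L1.
rewrite (hrecm n hn).
rewrite /Bpoly /Apoly ?poly.derivE !hornerE /=.
rewrite /Rn /Tn /denR /denT /Cn in hR hT *.
case: n hn hR hT => // n _ /= hR hT.
by field; rewrite hR hT.
Qed.

Section Growth.
Context {R : realType}.

Lemma poly_growth (p : {poly R}) :
  exists S d, 0 <= S /\ forall x : R, `|p.[x]| <= S * (1 + x ^+ 2) ^+ d.
Proof.
elim/poly_ind: p => [|p c [S [d [S0 H]]]].
  by exists 0, 0%N; split => // x; rewrite horner0 normr0 mul0r.
exists (S + `|c|), d.+1; split; first by rewrite addr_ge0.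
move=> x; rewrite hornerMXaddC.
have h1 : 1 <= (1 + x ^+ 2) ^+ d.
  by rewrite exprn_ege1 // lerDl sqr_ge0.
have hx : `|x| <= 1 + x ^+ 2.
  have [x0|x0] := lerP 0 x.
  - by rewrite ger0_norm //; nra.
  - by rewrite ltr0_norm //; nra.
have Y1 : 1 <= 1 + x ^+ 2 by rewrite lerDl sqr_ge0.
rewrite (le_trans (ler_normD _ _)) // normrM exprS.
set A := (1 + x ^+ 2) ^+ d in h1 H *.
set Y := 1 + x ^+ 2 in hx Y1 *.
have hp := H x.
have n1 := normr_ge0 p.[x]; have n2 := normr_ge0 x; have n3 := normr_ge0 c.
have e1 : `|p.[x]| * `|x| <= S * A * Y.
  apply: ler_pM => //.
have e2 : `|c| <= `|c| * (Y * A).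
  by rewrite ler_peMr // -[1]mulr1 ler_pM.
nra.
Qed.

Lemma cubic_bound (a b : R) :
  exists c, forall y, 0 <= y -> - y ^+ 3 + a * y ^+ 2 + b * y <= c.
Proof.
set K := `|a| + `|b| + 1.
have K1 : 1 <= K by rewrite /K lerDr addr_ge0.
exists (4 * K ^+ 3 + 2 * K ^+ 2) => y y0.
have ha : a * y ^+ 2 <= K * y ^+ 2.
  apply: ler_wpM2r; first exact: sqr_ge0.
  by rewrite /K (le_trans (ler_norm a)) // -addrA lerDl addr_ge0.
have hb : b * y <= K * y.
  apply: ler_wpM2r => //.
  by rewrite /K (le_trans (ler_norm b)) // addrAC lerDr addr_ge0.
have [hy|hy] := lerP y (2 * K).
- have e1 : K * y ^+ 2 <= K * (2 * K) ^+ 2.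
    apply: ler_wpM2l; first lra.
    by rewrite ler_sqr ?nnegrE //; lra.
  have e2 : K * y <= K * (2 * K) by apply: ler_wpM2l => //; lra.
  have e3 : 0 <= y ^+ 3 by rewrite exprn_ge0.
  have e4 : 4 * K ^+ 3 + 2 * K ^+ 2 = K * (2 * K) ^+ 2 + K * (2 * K) by ring.
  lra.
- have hy2 : 2 <= y by lra.
  have e1 : K * y ^+ 2 <= (y / 2) * y ^+ 2.
    by apply: ler_wpM2r; [exact: sqr_ge0|lra].
  have e2 : K * y <= (y / 2) * y by apply: ler_wpM2r; lra.
  have e3 : y / 2 * y <= y / 4 * y ^+ 2.
    rewrite expr2 mulrA; apply: ler_wpM2r => //.
    nra.
  have e4 : 0 <= K ^+ 2 by exact: sqr_ge0.
  have e5 : 0 <= K ^+ 3 by rewrite exprn_ge0 //; lra.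
  have e6 : y / 2 * y ^+ 2 + y / 4 * y ^+ 2 <= y ^+ 3.
    rewrite -mulrDl exprS; apply: ler_wpM2r; [exact: sqr_ge0|lra].
  lra.
Qed.

Lemma omega_gauss (tau t : R) (p : {poly R}) :
  exists M, 0 <= M /\ forall x, `|p.[x] * omega tau t x| <= M * gauss_fun x.
Proof.
have [S [d [S0 H]]] := poly_growth p.
have [c Hc] := cubic_bound tau (t + d%:R + 1).
exists (S * expR c); split; first by rewrite mulr_ge0 // expR_ge0.
move=> x.
rewrite normrM (gtr0_norm (expR_gt0 _)).
have y0 : 0 <= x ^+ 2 by exact: sqr_ge0.
have h1 : (1 + x ^+ 2) ^+ d <= expR (d%:R * x ^+ 2).
  rewrite expRM_natl; apply: lerXn2r; rewrite ?nnegrE ?expR_ge0 ?addr_ge0 //.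
  exact: expR_ge1Dx.
apply: (le_trans (ler_wpM2r (expR_ge0 _) (H x))).
apply: (le_trans (ler_wpM2r (expR_ge0 _) (ler_wpM2l S0 h1))).
rewrite -mulrA -expRD /gauss_fun -mulrA -expRD; apply: ler_wpM2l => //.
rewrite ler_expR.
have := Hc _ y0.
have -> : x ^+ 6 = (x ^+ 2) ^+ 3 by rewrite -exprM.
have -> : x ^+ 4 = (x ^+ 2) ^+ 2 by rewrite -exprM.
set y := x ^+ 2.
lra.
Qed.

End Growth.

Section Integ.
Context {R : realType}.
Variables tau t : R.
Notation mu := (@lebesgue_measure R).

Definition wpoly : {poly R} := - 'X^6 + tau%:P * 'X^4 + t%:P * 'X^2.

Lemma omegaE x : omega tau t x = expR (wpoly.[x]).
Proof. by rewrite /omega /wpoly !hornerE. Qed.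

Definition pw (p : {poly R}) (x : R) := p.[x] * omega tau t x.

Lemma continuous_omega : continuous (omega tau t).
Proof.
move=> x.
have -> : omega tau t = expR \o horner wpoly.
  by apply/funext => y; rewrite /= omegaE.
apply: continuous_comp; first exact: continuous_horner.
exact: continuous_expR.
Qed.

Lemma continuous_pw p : continuous (pw p).
Proof.
move=> x; apply: continuousM; first exact: continuous_horner.
exact: continuous_omega.
Qed.

Lemma integrable_pw p : mu.-integrable [set: R] (EFin \o pw p).
Proof.
have [M [M0 HM]] := omega_gauss tau t p.
apply: (@le_integrable _ _ _ mu _ measurableT (EFin \o pw p) (fun x => (M%:E * (EFin \o gauss_fun) x)%E)).
- apply/measurable_EFinP; apply: continuous_measurable_fun.
  exact: continuous_pw.
- move=> x _; rewrite /= lee_fin.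
  rewrite (ger0_norm (mulr_ge0 M0 (gauss_fun_ge0 x))).
  exact: HM.
- exact: integrableZl integrableT_gauss.
Qed.

Definition Lf (p : {poly R}) : R := fine (\int[mu]_(x in [set: R]) (pw p x)%:E).

Lemma Lf_fin p : (\int[mu]_(x in [set: R]) (pw p x)%:E)%E \is a fin_num.
Proof. exact: (integrable_fin_num measurableT (integrable_pw p)). Qed.

Lemma LfD p q : Lf (p + q) = Lf p + Lf q.
Proof.
rewrite /Lf -fineD ?Lf_fin //; congr fine.
rewrite -integralD //; try exact: integrable_pw.
by apply: eq_integral => x _; rewrite /pw hornerD mulrDl EFinD.
Qed.

Lemma LfZ c p : Lf (c%:P * p) = c * Lf p.
Proof.
rewrite /Lf.
transitivity (fine (c%:E * \int[mu]_(x in [set: R]) (pw p x)%:E)%E).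
  congr fine; rewrite -integralZl //; last exact: integrable_pw.
  by apply: eq_integral => x _; rewrite /pw hornerM hornerC -mulrA EFinM.
by rewrite fineM ?Lf_fin.
Qed.

Lemma Lf_one_pos : 0 < Lf 1.
Proof.
set k := -1 - `|tau| - `|t|.
have hk : forall x, 0 <= x <= 1 -> expR k <= omega tau t x.
  move=> x /andP[x0 x1]; rewrite /omega ler_expR.
  have -> : x ^+ 6 = (x ^+ 2) ^+ 3 by rewrite -exprM.
  have -> : x ^+ 4 = (x ^+ 2) ^+ 2 by rewrite -exprM.
  have y0 : 0 <= x ^+ 2 by exact: sqr_ge0.
  have y1 : x ^+ 2 <= 1 by rewrite expr_le1.
  set y := x ^+ 2 in y0 y1 *.
  have z0 : 0 <= y ^+ 2 by exact: sqr_ge0.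
  have z1 : y ^+ 2 <= 1 by rewrite expr_le1.
  have w1 : y ^+ 3 <= 1 by rewrite expr_le1.
  have ta := ler_norm tau; have ta' : - `|tau| <= tau by rewrite lerNl -normrN ler_norm.
  have tb' : - `|t| <= t by rewrite lerNl -normrN ler_norm.
  have n1 := normr_ge0 tau; have n2 := normr_ge0 t.
  rewrite /k; nra.
have h : ((expR k)%:E <= \int[@lebesgue_measure R]_(x in [set: R]) (pw 1 x)%:E)%E.
  apply: (@le_trans _ _ (\int[@lebesgue_measure R]_(x in `[0%R, 1%R]) (pw 1 x)%:E)%E).
  - apply: (@le_trans _ _ (\int[@lebesgue_measure R]_(x in `[0%R, 1%R]) (cst (expR k)%:E) x)%E).
      by rewrite integral_cst //= lebesgue_measure_itv /= lte_fin ltr01 /= oppr0 adde0 mule1.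
    apply: ge0_le_integral => //=.
    + apply/measurable_EFinP; apply: measurable_funTS; apply: continuous_measurable_fun.
      exact: continuous_pw.
    + move=> x; rewrite /= in_itv /= => hx; rewrite lee_fin /pw hornerC mul1r.
      exact: hk.
  - apply: ge0_subset_integral => //=.
    + apply/measurable_EFinP; apply: continuous_measurable_fun.
      exact: continuous_pw.
    + by move=> x _; rewrite lee_fin /pw hornerC mul1r /omega expR_ge0.
have hf := Lf_fin 1.
rewrite /Lf; move: h; rewrite -(fineK hf) lee_fin => h.
exact: (lt_le_trans (expR_gt0 _) h).
Qed.

End Integ.

Section FTCR.
Context {R : realType}.
Local Open Scope classical_set_scope.
Notation mu := (@lebesgue_measure R).

Lemma ftcR (f F : R -> R) (l1 l2 : R) :
  (forall x, 0 <= f x) -> continuous f ->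
  (forall x, is_derive x (1:R) F (f x)) ->
  F x @[x --> +oo] --> l1 -> F x @[x --> -oo] --> l2 ->
  (\int[mu]_(x in [set: R]) (f x)%:E = (l1 - l2)%:E)%E.
Proof.
move=> f0 cf dF Fl1 Fl2.
have dF' x : derivable F x 1 by case: (dF x).
have cF x : {for x, continuous F}.
  exact/differentiable_continuous/derivable1_diffP/dF'.
have DF x : F^`() x = f x by rewrite derive1E; case: (dF x).
have H i : (\int[mu]_(x in `[(- i%:R)%R, +oo[) (f x)%:E = (l1 - F (- i%:R))%:E)%E.
  rewrite (@ge0_continuous_FTC2y _ f F _ l1) ?EFinB //.
  - exact: continuous_subspaceT.
  - exact: cvg_at_right_filter (cF _).
pose Fs i := `[(- i%:R)%R, +oo[%classic : set R.
have nd : nondecreasing_seq Fs.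
  move=> i j hij; rewrite subsetEset => x; rewrite /Fs /= !in_itv /= !andbT.
  by move=> h; rewrite (le_trans _ h) // lerN2 ler_nat.
have bigU : \bigcup_i Fs i = [set: R].
  apply/seteqP; split => // x _.
  exists (Num.truncn `|x|).+1 => //.
  rewrite /Fs /= in_itv /= andbT lerNl.
  apply: (le_trans (ler_norm (- x))); rewrite normrN.
  exact/ltW/truncnS_gt.
have cvg1 := @ge0_nondecreasing_set_cvg_integral _ (measurableTypeR R) R Fs (EFin \o f) mu nd
  (fun i => measurable_itv _).
have mf : forall i, measurable_fun (Fs i) (EFin \o f).
  move=> i; apply/measurable_EFinP; apply: measurable_funTS.
  exact: continuous_measurable_fun.
have {}cvg1 := cvg1 mf (fun i x _ => f0 x).
rewrite bigU in cvg1.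
have eqH : (fun i => (\int[mu]_(x in Fs i) (EFin \o f) x)%E) =
    (fun i => (l1 - F (- i%:R))%:E).
  by apply/funext => i; exact: H.
rewrite eqH in cvg1.
have cvg2 : (fun i => (l1 - F (- i%:R))%:E) @ \oo --> (l1 - l2)%:E.
  apply: cvg_EFin; first exact: nearW.
  apply: cvgB; first exact: cvg_cst.
  have := (cvgNy_compNP F (nbhs l2)).1 Fl2.
  move=> h; exact: (cvg_comp _ _ cvgr_idn h).
exact: (cvg_unique _ cvg1 cvg2).
Qed.

End FTCR.

Section IBP.
Context {R : realType}.
Variables tau t : R.
Notation mu := (@lebesgue_measure R).

Lemma wpoly_deriv : (wpoly tau t)^`() = - vpoly R tau t.
Proof. rewrite /wpoly /vpoly !poly.derivE /=; ring. Qed.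

Lemma is_derive_pw (q : {poly R}) x :
  is_derive x (1:R) (pw tau t q) (pw tau t (q^`() - q * vpoly R tau t) x).
Proof.
have e : pw tau t q = (horner q) * (expR \o horner (wpoly tau t)).
  by apply/funext => y; rewrite /pw /= omegaE.
rewrite e.
have d2 : is_derive x (1:R) (expR \o horner (wpoly tau t))
    (expR ((wpoly tau t).[x]) * (wpoly tau t)^`().[x]).
  apply: is_derive1_comp.
have d3 := is_deriveM (is_derive_poly q x) d2.
apply: is_derive_eq.
rewrite /pw omegaE wpoly_deriv /= !hornerE /=.
rewrite /GRing.scale /=.
ring.
Qed.

Local Open Scope classical_set_scope.

Lemma gauss_le_oneDsqrV (x : R) : gauss_fun x <= (1 + x ^+ 2)^-1.
Proof.
rewrite /gauss_fun expRN lef_pV2 ?posrE ?expR_gt0 //.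
- exact: expR_ge1Dx.
- by rewrite ltr_pwDl // sqr_ge0.
Qed.

Lemma pw_cvg0 (q : {poly R}) :
  pw tau t q x @[x --> +oo] --> 0 /\ pw tau t q x @[x --> -oo] --> 0.
Proof.
have [M [M0 HM]] := omega_gauss tau t q.
have sq : forall (g : R -> R), (forall x, `|g x| <= M * gauss_fun x) ->
    g x @[x --> +oo] --> 0.
  move=> g Hg.
  apply: (@squeeze_cvgr _ _ _ _ (fun x => - (M * gauss_fun x)) (fun x => M * gauss_fun x)).
  - apply: nearW => x; have := Hg x; rewrite ler_norml => /andP[-> ->] //.
  - rewrite -oppr0 -(mulr0 M); apply: cvgN; apply: cvgMr; exact: cvg_gauss_fun.
  - rewrite -(mulr0 M); apply: cvgMr; exact: cvg_gauss_fun.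
split; first exact: sq.
apply/cvgNy_compNP; apply: sq => x /=.
by have := HM (- x); rewrite /gauss_fun sqrrN.
Qed.

Lemma atan_cvgNy : (@atan R) x @[x --> -oo] --> - (pi / 2).
Proof.
apply/cvgNy_compNP.
have -> : (@atan R \o -%R) = (fun x => - atan x).
  by apply/funext => x; rewrite /= atanN.
apply: cvgN; exact: cvgy_atan.
Qed.

Lemma Lf_r0 (q : {poly R}) : Lf tau t (q^`() - q * vpoly R tau t) = 0.
Proof.
set r := q^`() - q * vpoly R tau t.
have [M [M0 HM]] := omega_gauss tau t r.
pose h x := M * (1 + x ^+ 2)^-1.
have hge x : `|pw tau t r x| <= h x.
  exact: (le_trans (HM x) (ler_wpM2l M0 (gauss_le_oneDsqrV x))).
have h0 x : 0 <= h x by rewrite /h mulr_ge0 // invr_ge0 addr_ge0 // sqr_ge0.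
have ch : continuous h.
  have -> : h = (cst M) \* (fun x => (oneDsqr x)^-1) by apply/funext.
  move=> x; apply: continuousM; first exact: cst_continuous.
  exact: continuous_oneDsqrV.
pose F2 := fun y : R => M * atan y.
have datan x : is_derive x (1:R) F2 (h x).
  exact: (is_derive_eq (is_deriveZ M (is_derive1_atan x))).
have [q0p q0n] := pw_cvg0 q.
have I1 : (\int[mu]_(x in [set: R]) (pw tau t r x + h x)%:E =
    ((0 + M * (pi / 2)) - (0 + M * (- (pi / 2))))%:E)%E.
  apply: (@ftcR _ _ (pw tau t q + F2)).
  - move=> x; have := hge x; rewrite ler_norml => /andP[h1 _].
    by rewrite -(opprK (pw tau t r x)) addrC subr_ge0 lerNl.
  - by move=> x; apply: continuousD; [exact: continuous_pw|exact: ch].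
  - move=> x; exact: (is_deriveD (is_derive_pw q x) (datan x)).
  - by apply: cvgD; [exact: q0p | rewrite /F2; exact: (cvgMl_tmp (a:=M) (@cvgy_atan R))].
  - by apply: cvgD; [exact: q0n | rewrite /F2; exact: (cvgMl_tmp (a:=M) atan_cvgNy)].
have I2 : (\int[mu]_(x in [set: R]) (h x)%:E =
    (M * (pi / 2) - M * (- (pi / 2)))%:E)%E.
  apply: (@ftcR _ _ F2) => //.
  - rewrite /F2; exact: (cvgMl_tmp (a:=M) (@cvgy_atan R)).
  - rewrite /F2; exact: (cvgMl_tmp (a:=M) atan_cvgNy).
have ih : mu.-integrable [set: R] (EFin \o h).
  apply/integrableP; split.
    by apply/measurable_EFinP; exact: continuous_measurable_fun ch.
  under eq_integral => x _ do rewrite /= (ger0_norm (h0 x)).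
  by rewrite I2 ltry.
have eD : (\int[mu]_(x in [set: R]) (pw tau t r x + h x)%:E =
    \int[mu]_(x in [set: R]) (pw tau t r x)%:E + \int[mu]_(x in [set: R]) (h x)%:E)%E.
  rewrite -integralD //; last exact: integrable_pw.
have hf := Lf_fin tau t r.
rewrite eD I2 -(fineK hf) -EFinD in I1.
move: I1 => /eqP; rewrite eqe => /eqP I1.
rewrite /Lf; lra.
Qed.

End IBP.

Theorem theorem4p4 (R : realType) (tau t : R) (P : nat -> {poly R})
  (beta : nat -> R) :
  monic_OPS tau t P -> recurrence_coeffs P beta ->
  forall n : nat, (1 <= n)%N ->
  forall x : R, denR tau t beta n x != 0 -> denT tau t beta n x != 0 ->
    (P n)^`(2).[x] + Rn tau t beta n x * (P n)^`().[x]
    + Tn tau t beta n x * (P n).[x] = 0.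
Proof.
move=> [hsize horth] [hP0 [hb0 [hbpos [hP1 hrec]]]] n hn x hR hT.
have LD := @LfD R tau t.
have LZ := @LfZ R tau t.
have Lorth : forall m k, m <> k -> Lf tau t (P m * P k) = 0.
  move=> m k hmk; rewrite /Lf /pw.
  under eq_integral => y _ do rewrite hornerM.
  by rewrite horth.
have LIBP : forall p, Lf tau t p^`() = Lf tau t (p * vpoly R tau t).
  move=> p; have h0 := Lf_r0 tau t p.
  have -> : p^`() = (p^`() - p * vpoly R tau t) + p * vpoly R tau t by rewrite subrK.
  by rewrite LD h0 add0r.
have Lpos : 0 < Lf tau t (P 0%N * P 0%N) by rewrite hP0 mulr1; exact: Lf_one_pos.
have L1 := @lowering R tau t P beta (Lf tau t) LD LZ Lorth LIBP Lpos hsize hP0 hb0 hbpos hP1 hrec.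
apply: (@final_step R tau t P beta hb0 _ L1 n hn x hR hT).
move=> m hm; case: m hm => // m _ /=.
exact: (@hrecA R P beta hb0 hP1 hrec m).
Qed.
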